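(* Let $\mathbf{R}$ be a real $n\times M$ matrix and $\mathbf{F}$ a real $m\times M$ matrix with $m\ge M>n$, and suppose $\mathbf{F}$ has full column rank $M$. Then $$\|\mathbf{A}_s\|=\|(\mathbf{F}\mathbf{R}^{+})^{+}\|\le\|\mathbf{R}\mathbf{F}^{+}\|=\|\mathbf{A}_p\|,$$ where $\|\mathbf{Y}\|=\sqrt{\operatorname{Tr}(\mathbf{Y}^{*}\mathbf{Y})}$ is the Hilbert–Schmidt (Frobenius) norm. Consequently, the mean square reconstruction errors due to data noise satisfy $e_s\le e_p$.
   Context: For a matrix $\mathbf{X}$, $\mathbf{X}^{+}$ denotes its Moore–Penrose pseudoinverse. The columns of $\mathbf{R}$ are $M$ known probe parameter vectors in $\mathbb{R}^n$, and the columns of $\mathbf{F}$ are the corresponding measured patterns in $\mathbb{R}^m$. The standard-tomography reconstruction matrix is $\mathbf{A}_s=(\mathbf{F}\mathbf{R}^{+})^{+}$, and the data-pattern reconstruction matrix is $\mathbf{A}_p=\mathbf{R}\mathbf{F}^{+}$. For $\alpha\in\{s,p\}$, the mean square error is $e_\alpha^2=\overline{\|\mathbf{A}_\alpha\Delta\mathbf{p}\|^2}$, where the bar denotes the average over data-noise vectors $\Delta\mathbf{p}\in\mathbb{R}^m$ of fixed Euclidean norm $\epsilon$, uniformly distributed in direction. This average equals $\epsilon^2\|\mathbf{A}_\alpha\|^2/m$. *)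

(* Defs.v *)
From HB Require Import structures.
From mathcomp Require Import all_boot all_order all_algebra.
Set Implicit Arguments. Unset Strict Implicit. Unset Printing Implicit Defensive.
Import Order.TTheory GRing.Theory Num.Theory.
Local Open Scope ring_scope.

(* X is the Moore-Penrose pseudoinverse of A (real matrices: adjoint = transpose):
   the four Penrose conditions, which determine X uniquely. *)
Definition is_pinv (R : rcfType) (p q : nat) (A : 'M[R]_(p, q)) (X : 'M[R]_(q, p)) : Prop :=
  [/\ A *m X *m A = A, X *m A *m X = X, (A *m X)^T = A *m X & (X *m A)^T = X *m A].

Definition hs_norm (R : rcfType) (p q : nat) (Y : 'M[R]_(p, q)) : R :=
  Num.sqrt (\tr (Y^T *m Y)).

(* Root mean square reconstruction error e_alpha for data noise of norm eps in R^m: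
   e_alpha^2 = eps^2 ||A_alpha||^2 / m. *)
Definition rms_error (R : rcfType) (p q : nat) (eps : R) (A : 'M[R]_(p, q)) : R :=
  Num.sqrt (eps ^+ 2 * hs_norm A ^+ 2 / q%:R).

(* Main.v *)
Require Import Defs.
From HB Require Import structures.
From mathcomp Require Import all_boot all_order all_algebra.
Import Order.TTheory GRing.Theory Num.Theory.
Local Open Scope ring_scope.

Lemma tr_sq_ge0 (K : rcfType) (p q : nat) (Y : 'M[K]_(p, q)) : 0 <= \tr (Y^T *m Y).
Proof.
rewrite /mxtrace; apply: sumr_ge0 => i _; rewrite mxE.
apply: sumr_ge0 => k _; rewrite mxE; by rewrite -expr2 sqr_ge0.
Qed.

Lemma pinv_left (K : rcfType) (m M : nat) (Fm : 'M[K]_(m, M)) (Fp : 'M[K]_(M, m)) :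
  \rank Fm = M -> is_pinv Fm Fp -> Fp *m Fm = 1%:M.
Proof.
move=> rk [h1 h2 h3 h4].
set P := Fp *m Fm.
have PP : P *m P = P by rewrite /P mulmxA h2.
have rP : \rank P = M.
  apply/eqP; rewrite eqn_leq rank_leq_col /=.
  by rewrite -{1}rk -{1}h1 -mulmxA mxrankM_maxr.
have uP : P \in unitmx by rewrite -row_free_unit /row_free rP.
by rewrite -[P]mul1mx -(mulVmx uP) -mulmxA PP.
Qed.

Arguments pinv_left {K m M Fm Fp}.

Theorem mainTheorem2 (K : rcfType) (n M m : nat)
  (Rm : 'M[K]_(n, M)) (Fm : 'M[K]_(m, M))
  (Rp : 'M[K]_(M, n)) (Fp : 'M[K]_(M, m)) (As : 'M[K]_(n, m)) :
  (n < M)%N -> (M <= m)%N -> \rank Fm = M ->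
  is_pinv Rm Rp -> is_pinv Fm Fp -> is_pinv (Fm *m Rp) As ->
  hs_norm As <= hs_norm (Rm *m Fp) /\
  (forall eps : K, 0 <= eps -> rms_error eps As <= rms_error eps (Rm *m Fp)).
Proof.
move=> _ _ rk hR hF hA.
have FF := pinv_left rk hF.
case: hR => r1 r2 r3 r4.
case: hA => a1 a2 a3 a4.
set B := Fm *m Rp in a1 a2 a3 a4 *.
set Q := Rm *m Rp.
have QQ : Q *m Q = Q by rewrite /Q mulmxA r1.
have BQ : B *m Q = B by rewrite /B /Q -mulmxA [Rp *m _]mulmxA r2.
have e1 : As *m B = As *m B *m Q by rewrite -mulmxA BQ.
have e2 : As *m B = Q *m (As *m B).
  have := congr1 trmx e1; rewrite a4 trmx_mul a4 /Q r3 => h.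
  by rewrite {1}h.
have FB : Fp *m B = Rp by rewrite /B mulmxA FF mul1mx.
have e3 : Q = Q *m (As *m B).
  rewrite {1}/Q -FB -{1}a1.
  by rewrite /Q -FB !mulmxA.
have AB : As *m B = Q by rewrite e2 -e3.
set X := Rm *m Fp.
set Y := X - As.
have YB : Y *m B = 0.
  by rewrite /Y mulmxBl AB /X -mulmxA FB subrr.
have AsT : As^T = B *m As *m As^T.
  have h : As = As *m (B *m As)^T by rewrite a3 mulmxA a2.
  by rewrite {1}h trmx_mul trmxK.
have YA : Y *m As^T = 0 by rewrite AsT mulmxA [Y *m (B *m As)]mulmxA YB !mul0mx.
have XE : X = As + Y by rewrite /Y addrC subrK.
clearbody Y.
have trle : \tr (As^T *m As) <= \tr (X^T *m X).
  rewrite XE [(As + Y)^T]linearD /= mulmxDl !mulmxDr !mxtraceD.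
  have t1 : \tr (As^T *m Y) = 0 by rewrite mxtrace_mulC YA mxtrace0.
  have t2 : \tr (Y^T *m As) = 0 by rewrite -mxtrace_tr trmx_mul trmxK t1.
  rewrite t1 t2 addr0 add0r lerDl; exact: tr_sq_ge0.
have hle : hs_norm As <= hs_norm X by rewrite /hs_norm ler_wsqrtr.
split => // eps eps0.
rewrite /rms_error ler_wsqrtr //.
apply: ler_wpM2r; first by rewrite invr_ge0 ler0n.
apply: ler_wpM2l; first exact: sqr_ge0.
rewrite lerXn2r // nnegrE /hs_norm sqrtr_ge0 //.
Qed.
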